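(* Let $\mathsf K$ be a class of $\tau$-algebras. The following are equivalent: (1) $\mathsf K$ is a variety; (2) $\mathsf K=\mathrm{Mod}(\mathrm{Th}(\mathsf K))$; (3) $\mathsf K=(\mathsf K^{\triangle})^{\nabla}$ and $\mathsf K^{\triangle}$ is a variety of infinitary clone $\tau$-algebras.
   Context: Fix a set $\tau$ of operation symbols, each of arity $\omega$, disjoint from $\{q\}\cup\{e_i:i\in\omega\}$. A $\tau$-algebra is $\mathbf A=(A,f^{\mathbf A})_{f\in\tau}$ with each $f^{\mathbf A}:A^\omega\to A$. Let $V=\{e_0,e_1,\dots\}$ be a countable set of variables; $\tau$-terms over $V$ are the elements of the smallest set containing $V$ and containing $f(t_0,t_1,\dots)$ whenever $f\in\tau$ and $t_0,t_1,\dots$ are terms (well-founded, countably branching terms). For a term $t$ the term operation $t^{\mathbf A}:A^\omega\to A$ is given by $e_i^{\mathbf A}(s)=s_i$ and $f(t_0,t_1,\dots)^{\mathbf A}(s)=f^{\mathbf A}(t_0^{\mathbf A}(s),t_1^{\mathbf A}(s),\dots)$. An identity is a pair $t=u$ of terms; $\mathbf A$ satisfies it if $t^{\mathbf A}=u^{\mathbf A}$. $\mathrm{Th}(\mathbf A)$ is the set of identities satisfied by $\mathbf A$, $\mathrm{Th}(\mathsf K)=\bigcap_{\mathbf A\in\mathsf K}\mathrm{Th}(\mathbf A)$, and $\mathrm{Mod}(\Sigma)$ is the class of $\tau$-algebras satisfying every identity of $\Sigma$. A variety is a class closed under isomorphic copies, homomorphic images, subalgebras and arbitrary direct products. Let $\bar\tau$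 be the type with nullary symbols $e_i$ ($i\in\omega$), a nullary symbol $f$ for each $f\in\tau$, and one $\omega$-ary symbol $q$. An infinitary clone $\tau$-algebra is a $\bar\tau$-algebra $\mathcal C=(C,q^{\mathcal C},e_i^{\mathcal C},f^{\mathcal C})$ satisfying, for all elements: (N1) $q(e_i,x_0,x_1,\dots)=x_i$; (N2) $q(x,e_0,e_1,\dots)=x$; (N3) $q(q(x,y_0,y_1,\dots),\boldsymbol z)=q(x,q(y_0,\boldsymbol z),q(y_1,\boldsymbol z),\dots)$ where $\boldsymbol z=(z_0,z_1,\dots)$. Homomorphisms, subalgebras, products and varieties of these are those of $\bar\tau$-algebras. For a $\tau$-algebra $\mathbf A$, $\mathcal O^{(\omega)}_{\mathbf A}$ is the infinitary clone $\tau$-algebra whose universe is the set of all functions $A^\omega\to A$, with $e_i(s)=s_i$, $q(g_0,g_1,\dots)(s)=g_0(g_1(s),g_2(s),\dots)$, and the constant $f$ interpreted as $f^{\mathbf A}$. Its subalgebras are the functional infinitary clone $\tau$-algebras with value domain $\mathbf A$; their class is $\mathsf{FCA}(\mathbf A)$. For a class $\mathsf K$ of $\tau$-algebras, $\mathsf K^{\triangle}$ is the class of infinitary clone $\tau$-algebras isomorphic to a subalgebra of $\mathcal O^{(\omega)}_{\mathbf A}$ for some $\mathbf A\in\mathsf K$. For a class $\mathsf H$ of infinitary clone $\tau$-algebras, $\mathsf H^{\nabla}$ is the class of $\tau$-algebras isomorphic to some $\mathbf A$ with $\mathsf{FCA}(\mathbf A)\cap\mathsf H\neq\emptyset$. 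*)

(* Defs.v *)
Record signature := Signature { op_sym : Type; arity : op_sym -> Type }.

Record algebra (S : signature) := Algebra {
  carrier :> Type;
  interp : forall o : op_sym S, (arity S o -> carrier) -> carrier }.
Arguments Algebra {S} carrier interp.
Arguments carrier {S} _.
Arguments interp {S} _ o _.

Definition is_hom {S : signature} (A B : algebra S) (h : A -> B) : Prop :=
  forall (o : op_sym S) (s : arity S o -> A),
    h (interp A o s) = interp B o (fun i => h (s i)).

Definition isomorphic {S : signature} (A B : algebra S) : Prop :=
  exists (h : A -> B) (g : B -> A),
    is_hom A B h /\ (forall x, g (h x) = x) /\ (forall y, h (g y) = y).

Definition closed_subset {S : signature} (A : algebra S) (P : A -> Prop) : Prop :=
  forall (o : op_sym S) (s : arity S o -> A), (forall i, P (s i)) -> P (interp A o s).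

Definition subalgebra {S : signature} (A : algebra S) (P : A -> Prop)
  (HP : closed_subset A P) : algebra S :=
  Algebra {x : carrier A | P x}
    (fun o s => exist P (interp A o (fun i => proj1_sig (s i)))
                        (HP o _ (fun i => proj2_sig (s i)))).

Definition product {S : signature} (I : Type) (F : I -> algebra S) : algebra S :=
  Algebra (forall i : I, carrier (F i))
    (fun o s => fun i => interp (F i) o (fun a => s a i)).

Definition same_class {S : signature} (K L : algebra S -> Prop) : Prop :=
  forall A, K A <-> L A.

Definition variety {S : signature} (K : algebra S -> Prop) : Prop :=
  (forall A B : algebra S, K A -> isomorphic A B -> K B) /\
  (forall (A B : algebra S) (h : A -> B), K A -> is_hom A B h ->
      (forall y, exists x, h x = y) -> K B) /\
  (forall (A : algebra S) (P : A -> Prop) (HP : closed_subset A P), K A -> K (subalgebra A P HP)) /\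
  (forall (I : Type) (F : I -> algebra S), (forall i, K (F i)) -> K (product I F)).

Definition tau_sig (sym : Type) : signature := Signature sym (fun _ => nat).
Definition talg (sym : Type) := algebra (tau_sig sym).

Inductive term (sym : Type) : Type :=
| Var : nat -> term sym
| App : sym -> (nat -> term sym) -> term sym.
Arguments Var {sym} _.
Arguments App {sym} _ _.

Fixpoint term_op {sym : Type} (A : talg sym) (t : term sym) (s : nat -> A) : A :=
  match t with
  | Var i => s i
  | App f ts => interp A f (fun n => term_op A (ts n) s)
  end.

(* an identity t = u is a pair of terms; A satisfies it iff t^A = u^A *)
Definition satisfies {sym : Type} (A : talg sym) (t u : term sym) : Prop :=
  forall s : nat -> A, term_op A t s = term_op A u s.

Definition Th {sym : Type} (K : talg sym -> Prop) : term sym -> term sym -> Prop :=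
  fun t u => forall A, K A -> satisfies A t u.

Definition Mod {sym : Type} (Sigma : term sym -> term sym -> Prop) : talg sym -> Prop :=
  fun A => forall t u, Sigma t u -> satisfies A t u.

Inductive clone_sym (sym : Type) : Type :=
| Oq : clone_sym sym
| Oe : nat -> clone_sym sym
| Of : sym -> clone_sym sym.
Arguments Oq {sym}.
Arguments Oe {sym} _.
Arguments Of {sym} _.

Definition clone_arity {sym : Type} (o : clone_sym sym) : Type :=
  match o with Oq => nat | _ => Empty_set end.

Definition clone_sig (sym : Type) : signature := Signature (clone_sym sym) clone_arity.
Definition calg (sym : Type) := algebra (clone_sig sym).

(* argument list (x, y_0, y_1, ...) of q : index 0 is x, index i+1 is y_i *)
Definition scons {X : Type} (x : X) (ys : nat -> X) : nat -> X :=
  fun n => match n with 0 => x | S k => ys k end.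

Definition cq {sym : Type} (C : calg sym) (x : C) (ys : nat -> C) : C :=
  interp C (Oq : op_sym (clone_sig sym)) (scons x ys).
Definition ce {sym : Type} (C : calg sym) (i : nat) : C :=
  interp C (Oe i : op_sym (clone_sig sym)) (fun v : Empty_set => match v with end).
Definition cf {sym : Type} (C : calg sym) (f : sym) : C :=
  interp C (Of f : op_sym (clone_sig sym)) (fun v : Empty_set => match v with end).

Definition is_clone_alg {sym : Type} (C : calg sym) : Prop :=
  (forall (i : nat) (xs : nat -> C), cq C (ce C i) xs = xs i) /\
  (forall x : C, cq C x (ce C) = x) /\
  (forall (x : C) (ys zs : nat -> C),
      cq C (cq C x ys) zs = cq C x (fun i => cq C (ys i) zs)).

Definition clone_variety {sym : Type} (H : calg sym -> Prop) : Prop :=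
  variety H /\ (forall C, H C -> is_clone_alg C).

Definition O_interp {sym : Type} (A : talg sym) (o : clone_sym sym) :
  (clone_arity o -> ((nat -> A) -> A)) -> ((nat -> A) -> A) :=
  match o as o0 return (clone_arity o0 -> ((nat -> A) -> A)) -> ((nat -> A) -> A) with
  | Oq => fun g s => g 0 (fun i => g (S i) s)
  | Oe i => fun _ s => s i
  | Of f => fun _ s => interp A (f : op_sym (tau_sig sym)) s
  end.

Definition O_omega {sym : Type} (A : talg sym) : calg sym :=
  @Algebra (clone_sig sym) ((nat -> carrier A) -> carrier A) (O_interp A).

Definition triangle {sym : Type} (K : talg sym -> Prop) : calg sym -> Prop :=
  fun C => is_clone_alg C /\
    exists (A : talg sym) (P : O_omega A -> Prop) (HP : closed_subset (O_omega A) P),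
      K A /\ isomorphic C (subalgebra (O_omega A) P HP).

(* H^nabla : FCA(A) meets H, FCA(A) being the subalgebras of O^(omega)_A *)
Definition nabla {sym : Type} (H : calg sym -> Prop) : talg sym -> Prop :=
  fun B => exists A : talg sym, isomorphic B A /\
    exists (P : O_omega A -> Prop) (HP : closed_subset (O_omega A) P),
      H (subalgebra (O_omega A) P HP).

(* Main.v *)
Require Import Defs.
From Stdlib Require Import FunctionalExtensionality ProofIrrelevance ClassicalEpsilon Classical Cantor.

Lemma cid {X : Type} (P : X -> Prop) : (exists x, P x) -> {x | P x}.
Proof. apply constructive_indefinite_description. Qed.

Lemma fchoice {I X : Type} (R : I -> X -> Prop) :
  (forall i, exists x, R i x) -> exists f : I -> X, forall i, R i (f i).
Proof.
  intros H. exists (fun i => proj1_sig (cid _ (H i))).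
  intro i. exact (proj2_sig (cid _ (H i))).
Qed.

Lemma sig_eq {T : Type} (P : T -> Prop) (x y : sig P) :
  proj1_sig x = proj1_sig y -> x = y.
Proof.
  destruct x as [x px], y as [y py]; simpl; intros ->.
  f_equal; apply proof_irrelevance.
Qed.

Section Gen.
Context {S : signature}.

Lemma hom_comp (A B C : algebra S) h k :
  is_hom A B h -> is_hom B C k -> is_hom A C (fun x => k (h x)).
Proof. intros H1 H2 o s. rewrite H1, H2. reflexivity. Qed.

Lemma hom_proj (A : algebra S) P HP : is_hom (subalgebra A P HP) A (@proj1_sig _ _).
Proof. intros o s. reflexivity. Qed.

Lemma hom_into_sub (A B : algebra S) P HP (h : A -> B) (Hh : forall a, P (h a)) :
  is_hom A B h -> is_hom A (subalgebra B P HP) (fun a => exist P (h a) (Hh a)).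
Proof. intros H o s. apply sig_eq. simpl. apply H. Qed.

Lemma hom_prod_proj (I : Type) (F : I -> algebra S) i :
  is_hom (product I F) (F i) (fun x => x i).
Proof. intros o s. reflexivity. Qed.

Lemma image_closed (A B : algebra S) h :
  is_hom A B h -> closed_subset B (fun b => exists a, h a = b).
Proof.
  intros H o s Hs. destruct (fchoice _ Hs) as [f Hf].
  exists (interp A o f). rewrite H. f_equal. apply functional_extensionality. exact Hf.
Qed.

Lemma iso_of_bij (A B : algebra S) h :
  is_hom A B h -> (forall x y, h x = h y -> x = y) -> (forall y, exists x, h x = y) ->
  isomorphic A B.
Proof.
  intros H Hi Hs. destruct (fchoice _ Hs) as [g Hg].
  exists h, g. split; [exact H|]. split; [|exact Hg].
  intro x. apply Hi. apply Hg.
Qed.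

Lemma iso_hom_surj (A B : algebra S) :
  isomorphic A B -> exists h, is_hom A B h /\ forall y, exists x, h x = y.
Proof.
  intros (h & g & H & H1 & H2). exists h. split; [exact H|]. intro y. exists (g y). apply H2.
Qed.

Lemma iso_refl (A : algebra S) : isomorphic A A.
Proof. exists (fun x => x), (fun x => x). split; [intros o s; reflexivity|]. split; reflexivity. Qed.

Lemma inv_hom (A B : algebra S) h g :
  is_hom A B h -> (forall x, g (h x) = x) -> (forall y, h (g y) = y) -> is_hom B A g.
Proof.
  intros H H1 H2 o s.
  rewrite <- (H1 (interp A o (fun i => g (s i)))). f_equal. rewrite H.
  f_equal. apply functional_extensionality. intro; symmetry; apply H2.
Qed.

Lemma iso_sym (A B : algebra S) : isomorphic A B -> isomorphic B A.
Proof.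
  intros (h & g & H & H1 & H2). exists g, h. split; [|split; assumption].
  eapply inv_hom; eauto.
Qed.

Lemma iso_trans (A B C : algebra S) : isomorphic A B -> isomorphic B C -> isomorphic A C.
Proof.
  intros (h & g & H & H1 & H2) (h' & g' & H' & H1' & H2').
  exists (fun x => h' (h x)), (fun y => g (g' y)). split; [apply hom_comp; assumption|].
  split; intros; [rewrite H1'; apply H1 | rewrite H2; apply H2'].
Qed.

Lemma variety_same_class (K L : algebra S -> Prop) :
  same_class K L -> variety K -> variety L.
Proof.
  intros E (V1 & V2 & V3 & V4). split; [|split; [|split]].
  - intros A B HA HAB. apply E. apply (V1 A B); [apply E|]; assumption.
  - intros A B h HA Hh Hs. apply E. apply (V2 A B h); [apply E| |]; assumption.
  - intros A P HP HA. apply E. apply V3. apply E. assumption.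
  - intros I F HF. apply E. apply V4. intro i. apply E. apply HF.
Qed.

Lemma variety_iso (K : algebra S -> Prop) : variety K ->
  forall A B, K A -> isomorphic A B -> K B.
Proof. intros V; apply V. Qed.

End Gen.

Section Terms.
Context {sym : Type}.

Lemma term_hom (A B : talg sym) h t s :
  is_hom A B h -> term_op B t (fun n => h (s n)) = h (term_op A t s).
Proof.
  intros H. induction t as [i|f ts IH]; simpl; [reflexivity|].
  rewrite H. f_equal. apply functional_extensionality. intro n. apply IH.
Qed.

Lemma Mod_variety (Sigma : term sym -> term sym -> Prop) : variety (Mod Sigma).
Proof.
  assert (HH : forall (A B : talg sym) (h : A -> B), Mod Sigma A -> is_hom A B h ->
      (forall y, exists x, h x = y) -> Mod Sigma B).
  { intros A B h HA Hh Hs t u Htu s. destruct (fchoice _ (fun n => Hs (s n))) as [s' Hs'].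
    replace s with (fun n => h (s' n)) by (apply functional_extensionality; exact Hs').
    rewrite !(term_hom A B h); auto. f_equal. apply HA; auto. }
  split; [|split; [exact HH|split]].
  - intros A B HA HAB. destruct (iso_hom_surj _ _ HAB) as (h & Hh & Hs). eauto.
  - intros A P HP HA t u Htu s. apply sig_eq.
    rewrite <- !(term_hom _ _ _ _ _ (hom_proj A P HP)). apply HA; auto.
  - intros I F HF t u Htu s. apply functional_extensionality_dep. intro i.
    rewrite <- !(term_hom _ _ _ _ _ (hom_prod_proj I F i)). apply HF; auto.
Qed.

Lemma cov_lemma (K : talg sym -> Prop) (HK : variety K) (A : talg sym) :
  (forall s : nat -> A, exists (B : talg sym) (e : B -> A),
      K B /\ is_hom B A e /\ forall n, exists y, e y = s n) -> K A.
Proof.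
  intros Hc.
  assert (H' : forall s : nat -> A, {B : talg sym & {e : B -> A |
      K B /\ is_hom B A e /\ forall n, exists y, e y = s n}}).
  { intro s. destruct (cid _ (Hc s)) as [B HB]. exists B. exact (cid _ HB). }
  pose (Bf := fun s => projT1 (H' s)).
  pose (ef := fun s => proj1_sig (projT2 (H' s)) : Bf s -> A).
  assert (HBK : forall s, K (Bf s)) by (intro s; exact (proj1 (proj2_sig (projT2 (H' s))))).
  assert (Hef : forall s, is_hom (Bf s) A (ef s))
    by (intro s; exact (proj1 (proj2 (proj2_sig (projT2 (H' s)))))).
  assert (Hcov : forall s n, exists y, ef s y = s n)
    by (intro s; exact (proj2 (proj2 (proj2_sig (projT2 (H' s)))))).
  clearbody Bf ef. clear H' Hc.
  pose (Pr := product (nat -> carrier A) Bf).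
  pose (cov := fun (c s : nat -> carrier A) => forall n, exists m, s m = c n).
  pose (W := fun (x : Pr) (a : carrier A) (c : nat -> carrier A) =>
               forall s, cov c s -> ef s (x s) = a).
  pose (Q := fun x : Pr => exists a c, W x a c).
  assert (Hun : forall (cs : nat -> nat -> carrier A) s,
            cov (fun k => cs (fst (of_nat k)) (snd (of_nat k))) s -> forall i, cov (cs i) s).
  { intros cs s Hs i n. destruct (Hs (to_nat (i, n))) as [m Hm]. exists m.
    rewrite Hm, cancel_of_to. reflexivity. }
  assert (Wop : forall o (xs : nat -> Pr) (a : nat -> carrier A) cs,
            (forall i, W (xs i) (a i) (cs i)) ->
            W (interp Pr o xs) (interp A o a)
              (fun k => cs (fst (of_nat k)) (snd (of_nat k)))).
  { intros o xs a cs Hw s Hs. unfold Pr; simpl.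
    rewrite Hef. f_equal. apply functional_extensionality. intro n.
    apply Hw. apply Hun. exact Hs. }
  assert (Wuniq : forall x a c a' c', W x a c -> W x a' c' -> a = a').
  { intros x a c a' c' H1 H2.
    pose (cs := fun i : nat => match i with 0 => c | _ => c' end).
    pose (s := fun k => cs (fst (of_nat k)) (snd (of_nat k))).
    assert (Hs : cov s s) by (intro n; exists n; reflexivity).
    rewrite <- (H1 s (Hun cs s Hs 0)). apply (H2 s (Hun cs s Hs 1)). }
  assert (HQ : closed_subset Pr Q).
  { intros o xs Hxs.
    destruct (fchoice (fun i p => W (xs i) (fst p) (snd p))) as [f Hf].
    { intro i. destruct (Hxs i) as (a & c & H). exists (a, c). exact H. }
    eexists. eexists. apply Wop. intro i. apply Hf. }
  pose (Sb := subalgebra Pr Q HQ).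
  assert (KSb : K Sb) by (apply HK; apply HK; exact HBK).
  pose (Phi := fun x : Sb => proj1_sig (cid _ (proj2_sig x))).
  assert (HPhi : forall x : Sb, exists c, W (proj1_sig x) (Phi x) c)
    by (intro x; exact (proj2_sig (cid _ (proj2_sig x)))).
  clearbody Phi.
  apply (proj1 (proj2 HK) Sb A Phi KSb).
  - intros o xs. destruct (fchoice _ (fun i => HPhi (xs i))) as [cs Hcs].
    destruct (HPhi (interp Sb o xs)) as [c Hc].
    eapply Wuniq; [exact Hc|]. apply (Wop o (fun i => proj1_sig (xs i))). exact Hcs.
  - intro a.
    assert (Hy : forall s, exists y : Bf s, (exists n, s n = a) -> ef s y = a).
    { intro s. destruct (classic (exists n, s n = a)) as [[n Hn]|Hn].
      - destruct (Hcov s n) as [y Hy]. exists y. intros _. rewrite Hy; exact Hn.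
      - destruct (Hcov s 0) as [y _]. exists y. intro Hc; contradiction. }
    pose (x := fun s => proj1_sig (cid _ (Hy s)) : Bf s).
    assert (Wx : W x a (fun _ => a)).
    { intros s Hs. apply (proj2_sig (cid _ (Hy s))). destruct (Hs 0) as [m Hm]. eauto. }
    exists (exist Q x (ex_intro _ a (ex_intro _ _ Wx))).
    destruct (HPhi (exist Q x (ex_intro _ a (ex_intro _ _ Wx)))) as [c Hc].
    eapply Wuniq; [exact Hc|exact Wx].
Qed.

Lemma birkhoff (K : talg sym -> Prop) (HK : variety K) (A : talg sym) :
  Mod (Th K) A -> K A.
Proof.
  intros HA.
  pose (I := {p : term sym * term sym | ~ Th K (fst p) (snd p)}).
  assert (H' : forall i : I, {B : talg sym & {v : nat -> carrier B |
      K B /\ term_op B (fst (proj1_sig i)) v <> term_op B (snd (proj1_sig i)) v}}).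
  { intro i. destruct i as [[t u] Hn]. simpl in *.
    assert (E : exists B : talg sym, exists v : nat -> carrier B, K B /\ term_op B t v <> term_op B u v).
    { apply NNPP. intro Hc. apply Hn. intros B HB v. apply NNPP. intro Hne. apply Hc. eauto. }
    destruct (cid _ E) as [B HB]. exists B. exact (cid _ HB). }
  pose (Bf := fun i => projT1 (H' i)).
  pose (vf := fun i => proj1_sig (projT2 (H' i)) : nat -> carrier (Bf i)).
  assert (HBK : forall i, K (Bf i)) by (intro i; exact (proj1 (proj2_sig (projT2 (H' i))))).
  assert (Hv : forall i, term_op (Bf i) (fst (proj1_sig i)) (vf i) <>
                          term_op (Bf i) (snd (proj1_sig i)) (vf i))
    by (intro i; exact (proj2 (proj2_sig (projT2 (H' i))))).
  clearbody Bf vf. clear H'.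
  pose (Pr := product I Bf).
  pose (phi := fun t : term sym => (fun i => term_op (Bf i) t (vf i)) : Pr).
  assert (Key : forall t u, phi t = phi u -> Th K t u).
  { intros t u E. apply NNPP. intro Hn.
    apply (Hv (exist _ (t, u) Hn)). simpl. exact (f_equal (fun x => x (exist _ (t, u) Hn)) E). }
  pose (P := fun y : Pr => exists t, phi t = y).
  assert (HP : closed_subset Pr P).
  { intros o ys Hys. destruct (fchoice _ Hys) as [ts Hts]. exists (App o ts).
    replace ys with (fun n => phi (ts n)) by (apply functional_extensionality; exact Hts).
    reflexivity. }
  pose (Sb := subalgebra Pr P HP).
  assert (KSb : K Sb) by (apply HK; apply HK; exact HBK).
  apply (cov_lemma K HK A). intro s.
  pose (e := fun y : Sb => term_op A (proj1_sig (cid _ (proj2_sig y))) s).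
  assert (He : forall (y : Sb) t, phi t = proj1_sig y -> e y = term_op A t s).
  { intros y t Ht. unfold e. destruct (cid _ (proj2_sig y)) as [t' Ht']. simpl.
    apply HA. apply Key. rewrite Ht, Ht'. reflexivity. }
  exists Sb, e. split; [exact KSb|]. split.
  - intros o ys. destruct (fchoice _ (fun n => proj2_sig (ys n))) as [ts Hts].
    rewrite (He _ (App o ts)).
    + simpl. f_equal. apply functional_extensionality. intro n. symmetry. apply He. apply Hts.
    + simpl. change (phi (App o ts) = interp Pr o (fun i => proj1_sig (ys i))).
      replace (fun i => proj1_sig (ys i)) with (fun n => phi (ts n))
        by (apply functional_extensionality; exact Hts). reflexivity.
  - intro n. exists (exist P (phi (Var n)) (ex_intro _ (Var n) eq_refl)).
    rewrite (He _ (Var n)); reflexivity.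
Qed.

End Terms.

Section Clone.
Context {sym : Type}.

Definition red (C : calg sym) : talg sym :=
  @Algebra (tau_sig sym) (carrier C) (fun f s => cq C (cf C f) s).

Lemma scons_eta {X} (s : nat -> X) : scons (s 0) (fun i => s (S i)) = s.
Proof. apply functional_extensionality. intros [|n]; reflexivity. Qed.

Lemma empty_fun_eq {X} (f g : Empty_set -> X) : f = g.
Proof. apply functional_extensionality. intros []. Qed.

Lemma hom_cq (C D : calg sym) h x ys : is_hom C D h ->
  h (cq C x ys) = cq D (h x) (fun i => h (ys i)).
Proof.
  intros H. unfold cq. rewrite H. f_equal. apply functional_extensionality. intros [|n]; reflexivity.
Qed.

Lemma hom_ce (C D : calg sym) h i : is_hom C D h -> h (ce C i) = ce D i.
Proof. intros H. unfold ce. rewrite H. f_equal. apply empty_fun_eq. Qed.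

Lemma hom_cf (C D : calg sym) h f : is_hom C D h -> h (cf C f) = cf D f.
Proof. intros H. unfold cf. rewrite H. f_equal. apply empty_fun_eq. Qed.

Lemma hom_of_c (C D : calg sym) h :
  (forall x ys, h (cq C x ys) = cq D (h x) (fun i => h (ys i))) ->
  (forall i, h (ce C i) = ce D i) -> (forall f, h (cf C f) = cf D f) -> is_hom C D h.
Proof.
  intros Hq He Hf o. destruct o as [|i|f]; simpl; intro s.
  - rewrite <- (scons_eta s). change (h (cq C (s 0) (fun i => s (S i))) =
      interp D Oq (fun i => h (scons (s 0) (fun i0 => s (S i0)) i))).
    rewrite Hq. unfold cq. f_equal. apply functional_extensionality. intros [|n]; reflexivity.
  - replace s with (fun v : Empty_set => match v with end : carrier C) by apply empty_fun_eq.
    change (h (ce C i) = interp D (Oe i : op_sym (clone_sig sym)) (fun v : Empty_set => h (match v with end))).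
    rewrite He. unfold ce. f_equal. apply empty_fun_eq.
  - replace s with (fun v : Empty_set => match v with end : carrier C) by apply empty_fun_eq.
    change (h (cf C f) = interp D (Of f : op_sym (clone_sig sym)) (fun v : Empty_set => h (match v with end))).
    rewrite Hf. unfold cf. f_equal. apply empty_fun_eq.
Qed.

Lemma red_hom (C D : calg sym) h : is_hom C D h -> is_hom (red C) (red D) h.
Proof. intros H f s. simpl. rewrite (hom_cq _ _ _ _ _ H), (hom_cf _ _ _ _ H). reflexivity. Qed.

Lemma O_clone (A : talg sym) : is_clone_alg (O_omega A).
Proof. split; [|split]; reflexivity. Qed.

Lemma image_clone (C D : calg sym) h : is_clone_alg C -> is_hom C D h ->
  (forall y, exists x, h x = y) -> is_clone_alg D.
Proof.
  intros (N1 & N2 & N3) H Hs.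
  assert (Hs' : forall ys : nat -> D, exists ys', ys = fun n => h (ys' n)).
  { intro ys. destruct (fchoice _ (fun n => Hs (ys n))) as [f Hf]. exists f.
    apply functional_extensionality. intro n. symmetry; apply Hf. }
  split; [|split].
  - intros i xs. destruct (Hs' xs) as [xs' ->]. rewrite <- (hom_ce _ _ _ _ H), <- (hom_cq _ _ _ _ _ H).
    rewrite N1. reflexivity.
  - intro x. destruct (Hs x) as [x' <-].
    replace (ce D) with (fun i => h (ce C i)) by (apply functional_extensionality; intro; apply (hom_ce _ _ _ _ H)).
    rewrite <- (hom_cq _ _ _ _ _ H), N2. reflexivity.
  - intros x ys zs. destruct (Hs x) as [x' <-]. destruct (Hs' ys) as [ys' ->]. destruct (Hs' zs) as [zs' ->].
    rewrite <- !(hom_cq _ _ _ _ _ H).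
    replace (fun i => cq D (h (ys' i)) (fun i0 => h (zs' i0))) with (fun i => h (cq C (ys' i) zs'))
      by (apply functional_extensionality; intro; apply (hom_cq _ _ _ _ _ H)).
    rewrite <- (hom_cq _ _ _ _ _ H), N3. reflexivity.
Qed.

Lemma sub_clone (C : calg sym) P HP : is_clone_alg C -> is_clone_alg (subalgebra C P HP).
Proof.
  intros (N1 & N2 & N3). pose proof (hom_proj C P HP) as Hp. split; [|split].
  - intros i xs. apply sig_eq. rewrite (hom_cq _ _ _ _ _ Hp), (hom_ce _ _ _ _ Hp). apply N1.
  - intro x. apply sig_eq. rewrite (hom_cq _ _ _ _ _ Hp).
    replace (fun i => proj1_sig (ce (subalgebra C P HP) i)) with (ce C)
      by (apply functional_extensionality; intro; symmetry; apply (hom_ce _ _ _ _ Hp)).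
    apply N2.
  - intros x ys zs. apply sig_eq. rewrite !(hom_cq _ _ _ _ _ Hp).
    replace (fun i => proj1_sig (cq (subalgebra C P HP) (ys i) zs)) with
      (fun i => cq C (proj1_sig (ys i)) (fun j => proj1_sig (zs j)))
      by (apply functional_extensionality; intro; symmetry; apply (hom_cq _ _ _ _ _ Hp)).
    apply N3.
Qed.

Lemma prod_cq (I : Type) (C : I -> calg sym) x ys :
  cq (product I C) x ys = fun i => cq (C i) (x i) (fun n => ys n i).
Proof.
  apply functional_extensionality_dep. intro i.
  exact (hom_cq _ _ _ x ys (hom_prod_proj I C i)).
Qed.

Lemma prod_clone (I : Type) (C : I -> calg sym) : (forall i, is_clone_alg (C i)) ->
  is_clone_alg (product I C).
Proof.
  intros HC. split; [|split].
  - intros i xs. rewrite prod_cq. apply functional_extensionality_dep. intro j.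
    replace (ce (product I C) i j) with (ce (C j) i)
      by (symmetry; exact (hom_ce _ _ _ i (hom_prod_proj I C j))). apply HC.
  - intros x. rewrite prod_cq. apply functional_extensionality_dep. intro j.
    replace (fun n => ce (product I C) n j) with (ce (C j))
      by (apply functional_extensionality; intro; symmetry; apply (hom_ce _ _ _ _ (hom_prod_proj I C j))).
    apply HC.
  - intros x ys zs. rewrite !prod_cq. apply functional_extensionality_dep. intro j.
    rewrite (proj2 (proj2 (HC j))). f_equal. apply functional_extensionality. intro n.
    rewrite prod_cq. reflexivity.
Qed.

Definition rho (D : calg sym) : D -> O_omega (red D) := fun a s => cq D a s.

Lemma rho_hom (D : calg sym) : is_clone_alg D -> is_hom D (O_omega (red D)) (rho D).
Proof.
  intros (N1 & N2 & N3). apply hom_of_c.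
  - intros x ys. unfold rho. apply functional_extensionality. intro z. apply N3.
  - intro i. unfold rho. apply functional_extensionality. intro z. apply N1.
  - intro f. reflexivity.
Qed.

Lemma rep_iso (D : calg sym) (HD : is_clone_alg D) :
  isomorphic D (subalgebra (O_omega (red D)) _ (image_closed _ _ _ (rho_hom D HD))).
Proof.
  eapply iso_of_bij.
  - apply (hom_into_sub _ _ _ _ (rho D) (fun a => ex_intro _ a eq_refl)). apply rho_hom; auto.
  - intros x y E. apply (f_equal (@proj1_sig _ _)) in E. simpl in E.
    rewrite <- (proj1 (proj2 HD) x), <- (proj1 (proj2 HD) y).
    exact (f_equal (fun u => u (ce D)) E).
  - intros [u [a Ha]]. exists a. apply sig_eq. exact Ha.
Qed.

Lemma triangle_intro (K : talg sym -> Prop) (D : calg sym) :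
  is_clone_alg D -> K (red D) -> triangle K D.
Proof.
  intros HD HK. split; [exact HD|]. exists (red D).
  exists (fun b => exists a, rho D a = b), (image_closed _ _ _ (rho_hom D HD)).
  split; [exact HK|]. apply rep_iso.
Qed.

Lemma L1b (K : talg sym -> Prop) (HK : variety K) (D : calg sym) :
  triangle K D -> K (red D).
Proof.
  intros [HD (A & P & HP & KA & Hiso)].
  destruct Hiso as (h & g & Hh & H1 & H2).
  pose proof (inv_hom _ _ _ _ Hh H1 H2) as Hg.
  pose (Pr := product (nat -> carrier A) (fun _ => A)).
  assert (HP' : closed_subset Pr P).
  { intros f xs Hxs. change (P (cq (O_omega A) (cf (O_omega A) f) xs)).
    apply HP. intros [|n]; [apply HP; intros []|apply Hxs]. }
  pose (Sb := subalgebra Pr P HP').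
  assert (KSb : K Sb) by (apply HK; apply HK; intro; exact KA).
  apply (proj1 (proj2 HK) Sb (red D) (fun x => g x) KSb).
  - intros f xs. simpl. rewrite <- (hom_cf _ _ _ _ Hg), <- (hom_cq _ _ _ _ _ Hg). f_equal.
    apply sig_eq. reflexivity.
  - intro y. exists (h y). apply H1.
Qed.

End Clone.

Section Fwd.
Context {sym : Type}.

Lemma triangle_variety (K : talg sym -> Prop) (HK : variety K) : clone_variety (triangle K).
Proof.
  assert (HH : forall (C D : calg sym) h, triangle K C -> is_hom C D h ->
            (forall y, exists x, h x = y) -> triangle K D).
  { intros C D h HC Hh Hs. apply triangle_intro.
    - exact (image_clone C D h (proj1 HC) Hh Hs).
    - apply (proj1 (proj2 HK) (red C) (red D) h); [apply L1b; auto|apply red_hom; auto|exact Hs]. }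
  split; [|intros C HC; exact (proj1 HC)].
  split; [|split; [exact HH|split]].
  - intros C D HC HCD. destruct (iso_hom_surj _ _ HCD) as (h & Hh & Hs). eauto.
  - intros C P HP HC. apply triangle_intro; [apply sub_clone; exact (proj1 HC)|].
    assert (HP' : closed_subset (red C) P).
    { intros f xs Hxs. apply HP. intros [|n]; [apply HP; intros []|apply Hxs]. }
    apply (proj1 (proj2 HK) (subalgebra (red C) P HP') (red (subalgebra C P HP))
             (fun x : carrier (subalgebra (red C) P HP') => (x : carrier (red (subalgebra C P HP))))).
    + apply HK. apply L1b; auto.
    + intros f xs. apply sig_eq.
      transitivity (cq C (cf C f) (fun i => proj1_sig (xs i))); [reflexivity|].
      symmetry. etransitivity; [exact (hom_cq _ _ _ (cf (subalgebra C P HP) f) xs (hom_proj C P HP))|].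
      f_equal. exact (hom_cf _ _ _ f (hom_proj C P HP)).
    + intro y; exists y; reflexivity.
  - intros I F HF. apply triangle_intro; [apply prod_clone; intro i; exact (proj1 (HF i))|].
    apply (proj1 (proj2 HK) (product I (fun i => red (F i))) (red (product I F))
             (fun x : carrier (product I (fun i => red (F i))) => (x : carrier (red (product I F))))).
    + apply HK. intro i. apply L1b; auto.
    + intros f xs. symmetry. etransitivity; [exact (prod_cq I F (cf (product I F) f) xs)|].
      apply functional_extensionality_dep. intro i.
      change (cq (F i) (cf (product I F) f i) (fun n => xs n i) = cq (F i) (cf (F i) f) (fun n => xs n i)).
      f_equal. exact (hom_cf _ _ _ f (hom_prod_proj I F i)).
    + intro y; exists y; reflexivity.
Qed.

Lemma K_nabla (K : talg sym -> Prop) (HK : variety K) :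
  same_class K (nabla (triangle K)).
Proof.
  intro B. split.
  - intro KB. exists B. split; [apply iso_refl|].
    assert (HT : closed_subset (O_omega B) (fun _ => True)) by (intros o s Hs; exact I).
    exists (fun _ => True), HT. split; [apply sub_clone, O_clone|].
    exists B, (fun _ => True), HT. split; [exact KB|apply iso_refl].
  - intros (A & HBA & P & HP & HT).
    pose (C := subalgebra (O_omega A) P HP).
    assert (KC : K (red C)) by (apply L1b; auto).
    apply (variety_iso K HK A B); [|apply iso_sym; exact HBA].
    apply (cov_lemma K HK A). intro s.
    exists (red C), (fun x => proj1_sig x s). split; [exact KC|]. split.
    + intros f xs.
      transitivity (cq (O_omega A) (cf (O_omega A) f) (fun i => proj1_sig (xs i)) s); [|reflexivity].
      apply (f_equal (fun u => u s)).
      etransitivity; [exact (hom_cq _ _ _ (cf C f) xs (hom_proj _ P HP))|].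
      try (f_equal; exact (hom_cf _ _ _ f (hom_proj _ P HP))).
    + intro n. exists (ce C n).
      transitivity (ce (O_omega A) n s); [|reflexivity]. apply (f_equal (fun u => u s)).
      exact (hom_ce _ _ _ n (hom_proj _ P HP)).
Qed.

End Fwd.

Section Bwd.
Context {sym : Type}.
Variable T : calg sym -> Prop.
Hypothesis HT : clone_variety T.

Definition rep (B : talg sym) : Prop :=
  exists (D : calg sym) (Psi : D -> O_omega B), T D /\ is_hom D (O_omega B) Psi.

Lemma rep_nabla B : rep B -> nabla T B.
Proof.
  intros (D & Psi & TD & HPsi). exists B. split; [apply iso_refl|].
  exists (fun b => exists a, Psi a = b), (image_closed _ _ _ HPsi).
  apply (proj1 (proj2 (proj1 HT)) D (subalgebra (O_omega B) _ (image_closed _ _ _ HPsi))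
    (fun d => exist (fun b => exists a, Psi a = b) (Psi d) (ex_intro _ d eq_refl)) TD).
  - apply hom_into_sub. exact HPsi.
  - intros [u [d Hd]]. exists d. apply sig_eq. exact Hd.
Qed.

Lemma iso_O (A B : talg sym) (h : B -> A) g :
  is_hom B A h -> (forall x, g (h x) = x) -> (forall y, h (g y) = y) ->
  is_hom (O_omega A) (O_omega B) (fun u s => g (u (fun n => h (s n)))).
Proof.
  intros Hh H1 H2 o. destruct o as [|i|f]; intro s; apply functional_extensionality; intro z; simpl.
  - f_equal. f_equal. apply functional_extensionality. intro n. symmetry. apply H2.
  - apply H1.
  - rewrite <- Hh. apply H1.
Qed.

Lemma nabla_rep B : nabla T B -> rep B.
Proof.
  intros (A & (h & g & Hh & H1 & H2) & P & HP & TC).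
  pose proof (inv_hom _ _ _ _ Hh H1 H2) as Hg.
  exists (subalgebra (O_omega A) P HP).
  exists (fun x s => g (proj1_sig x (fun n => h (s n)))). split; [exact TC|].
  apply (hom_comp _ (O_omega A) (O_omega B) (fun x : subalgebra (O_omega A) P HP => proj1_sig x)
     (fun (u : O_omega A) (s : nat -> B) => g (u (fun n => h (s n))))).
  - apply hom_proj.
  - apply iso_O; assumption.
Qed.

Lemma rep_H (B B' : talg sym) h : rep B -> is_hom B B' h -> (forall y, exists x, h x = y) -> rep B'.
Proof.
  intros (D & Psi & TD & HPsi) Hh Hs.
  destruct (fchoice _ Hs) as [r Hr].
  pose (Pd := fun d : D => forall s s' : nat -> B, (forall n, h (s n) = h (s' n)) ->
                 h (Psi d s) = h (Psi d s')).
  assert (HPd : closed_subset D Pd).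
  { intros o xs Hxs s s' E. rewrite !HPsi. destruct o as [|i|f]; simpl.
    - apply (Hxs 0). intro n. apply (Hxs (S n)). exact E.
    - apply E.
    - rewrite !Hh. f_equal. apply functional_extensionality. exact E. }
  exists (subalgebra D Pd HPd).
  exists (fun x z => h (Psi (proj1_sig x) (fun n => r (z n)))). split.
  - apply (proj1 (proj2 (proj2 (proj1 HT)))). exact TD.
  - intros o xs. apply functional_extensionality. intro z.
    change (h (Psi (interp D o (fun i => proj1_sig (xs i))) (fun n => r (z n))) =
            O_interp B' o (fun i => fun z => h (Psi (proj1_sig (xs i)) (fun n => r (z n)))) z).
    rewrite HPsi. destruct o as [|i|f]; simpl.
    + apply (proj2_sig (xs 0)). intro n. rewrite Hr. reflexivity.
    + apply Hr.
    + rewrite Hh. f_equal. apply functional_extensionality. intro n. apply Hr.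
Qed.

Lemma rep_S (B : talg sym) P HP : rep B -> rep (subalgebra B P HP).
Proof.
  intros (D & Psi & TD & HPsi).
  pose (Pd := fun d : D => forall s : nat -> B, (forall n, P (s n)) -> P (Psi d s)).
  assert (HPd : closed_subset D Pd).
  { intros o xs Hxs s Hs. rewrite HPsi. destruct o as [|i|f]; simpl.
    - apply (Hxs 0). intro n. apply (Hxs (S n)). exact Hs.
    - apply Hs.
    - apply HP. exact Hs. }
  exists (subalgebra D Pd HPd).
  exists (fun (x : subalgebra D Pd HPd) (z : nat -> subalgebra B P HP) => exist P (Psi (proj1_sig x) (fun n => proj1_sig (z n)))
                      (proj2_sig x _ (fun n => proj2_sig (z n)))). split.
  - apply (proj1 (proj2 (proj2 (proj1 HT)))). exact TD.
  - intros o xs. apply functional_extensionality. intro z. apply sig_eq.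
    change (Psi (interp D o (fun i => proj1_sig (xs i))) (fun n => proj1_sig (z n)) =
       proj1_sig (O_interp (subalgebra B P HP) o (fun i => fun z =>
          exist P (Psi (proj1_sig (xs i)) (fun n => proj1_sig (z n)))
                      (proj2_sig (xs i) _ (fun n => proj2_sig (z n)))) z)).
    rewrite HPsi. destruct o as [|i|f]; reflexivity.
Qed.

Lemma rep_P (I : Type) (F : I -> talg sym) : (forall i, rep (F i)) -> rep (product I F).
Proof.
  intros HF.
  assert (H' : forall i, {D : calg sym & {Psi : D -> O_omega (F i) | T D /\ is_hom D _ Psi}}).
  { intro i. destruct (cid _ (HF i)) as [D HD]. exists D. exact (cid _ HD). }
  pose (Df := fun i => projT1 (H' i)).
  pose (Pf := fun i => proj1_sig (projT2 (H' i)) : Df i -> O_omega (F i)).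
  assert (TDf : forall i, T (Df i)) by (intro i; exact (proj1 (proj2_sig (projT2 (H' i))))).
  assert (HPf : forall i, is_hom (Df i) _ (Pf i)) by (intro i; exact (proj2 (proj2_sig (projT2 (H' i))))).
  clearbody Df Pf. clear H'.
  exists (product I Df).
  exists (fun d z => fun i => Pf i (d i) (fun n => z n i)). split.
  - apply (proj2 (proj2 (proj2 (proj1 HT)))). exact TDf.
  - intros o ds. apply functional_extensionality. intro z. apply functional_extensionality_dep. intro i.
    change (Pf i (interp (Df i) o (fun a => ds a i)) (fun n => z n i) =
      O_interp (product I F) o (fun a => fun z => fun i => Pf i (ds a i) (fun n => z n i)) z i).
    rewrite HPf. destruct o as [|j|f]; reflexivity.
Qed.

Lemma nabla_variety : variety (nabla T).
Proof.
  assert (HH : forall (A B : talg sym) h, nabla T A -> is_hom A B h ->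
            (forall y, exists x, h x = y) -> nabla T B).
  { intros A B h HA Hh Hs. apply rep_nabla. eapply rep_H; eauto. apply nabla_rep; auto. }
  split; [|split; [exact HH|split]].
  - intros A B HA HAB. destruct (iso_hom_surj _ _ HAB) as (h & Hh & Hs). eauto.
  - intros A P HP HA. apply rep_nabla, rep_S, nabla_rep, HA.
  - intros I F HF. apply rep_nabla, rep_P. intro i. apply nabla_rep, HF.
Qed.

End Bwd.

Theorem theorem6p7 (sym : Type) (K : talg sym -> Prop) :
  (variety K <-> same_class K (Mod (Th K))) /\
  (variety K <-> (same_class K (nabla (triangle K)) /\ clone_variety (triangle K))).
Proof.
  split; split.
  - intros HK A. split.
    + intros KA t u Htu. apply Htu. exact KA.
    + apply birkhoff; auto.
  - intros E. apply (variety_same_class (Mod (Th K))); [intro A; split; apply E|].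
    apply Mod_variety.
  - intros HK. split; [apply K_nabla; auto|apply triangle_variety; auto].
  - intros [E HT]. apply (variety_same_class (nabla (triangle K))); [intro A; split; apply E|].
    apply nabla_variety. exact HT.
Qed.
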